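(* Let $(\mathcal Q,d)$ be a Hadamard space, $Y$ a $\mathcal Q$-valued random variable, $o\in\mathcal Q$, and $\tau\in\mathcal S_0^+$ with $\mathbb E[\tau'(d(Y,o))]<\infty$. Let $m\in\arg\min_{q\in\mathcal Q}\mathbb E[\tau(d(Y,q))-\tau(d(Y,o))]$ and $x_0:=\inf\{x\in(0,\infty):\tau'^{\oplus}(x)=0\}$ (with $\inf\emptyset=\infty$). If $\mathbb P(d(Y,m)<x_0)>0$, then $m$ is the only $\tau$-Fréchet mean of $Y$. In particular, if $\tau'^{\oplus}(x)>0$ for all $x\in(0,\infty)$, the $\tau$-Fréchet mean is unique.
   Context: A Hadamard space is a complete metric space $(\mathcal Q,d)$ such that for all $y_0,y_1$ there is $m$ with $\frac12 d(y_0,q)^2+\frac12 d(y_1,q)^2-\frac14 d(y_0,y_1)^2\ge d(q,m)^2$ for all $q$. $\mathcal S_0^+$ is the set of nondecreasing convex $\tau:[0,\infty)\to\mathbb R$, differentiable on $(0,\infty)$ with concave derivative $\tau'$ (with $\tau'(0):=\lim_{x\searrow0}\tau'(x)$), $\tau(0)=0$ and $\tau'(x)>0$ for $x>0$; $\tau'^{\oplus}$ is the right derivative of $\tau'$. A $\tau$-Fréchet mean of $Y$ is an element of $\arg\min_{q}\mathbb E[\tau(d(Y,q))-\tau(d(Y,o))]$. *)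

(* Defs.v *)
From HB Require Import structures.
From mathcomp Require Import all_boot all_order all_algebra.
From mathcomp Require Import all_classical all_reals all_analysis.
Set Implicit Arguments. Unset Strict Implicit. Unset Printing Implicit Defensive.
Import Order.TTheory GRing.Theory Num.Theory.
Import numFieldNormedType.Exports.
Local Open Scope classical_set_scope.
Local Open Scope ring_scope.

Section Defs.
Variable R : realType.

Definition is_metric (Q : Type) (d : Q -> Q -> R) : Prop :=
  (forall x y, 0 <= d x y) /\
  (forall x y, d x y = 0 <-> x = y) /\
  (forall x y, d x y = d y x) /\
  (forall x y z, d x z <= d x y + d y z).

Definition metric_complete (Q : Type) (d : Q -> Q -> R) : Prop :=
  forall u : nat -> Q,
    (forall e : R, 0 < e -> exists N : nat, forall m n : nat,
        (N <= m)%N -> (N <= n)%N -> d (u m) (u n) < e) ->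
    exists l : Q, (fun n => d (u n) l) @ \oo --> (0 : R).

Definition hadamard_space (Q : Type) (d : Q -> Q -> R) : Prop :=
  is_metric d /\ metric_complete d /\
  forall y0 y1 : Q, exists m : Q, forall q : Q,
    2^-1 * d y0 q ^+ 2 + 2^-1 * d y1 q ^+ 2 - 4^-1 * d y0 y1 ^+ 2
      >= d q m ^+ 2.

Definition metric_open (Q : Type) (d : Q -> Q -> R) (A : set Q) : Prop :=
  forall x, A x -> exists e : R, 0 < e /\ forall y, d x y < e -> A y.

Definition random_variable_in (dO : measure_display) (Omega : measurableType dO)
  (Q : Type) (d : Q -> Q -> R) (Y : Omega -> Q) : Prop :=
  forall A : set Q, metric_open d A -> measurable (Y @^-1` A).

Definition tau_d (tau : R -> R) (x : R) : R :=
  if 0 < x then (derive1 tau) x else lim ((derive1 tau) @ 0^'+).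

Definition rderiv (f : R -> R) (x : R) : R :=
  lim ((fun h : R => h^-1 * (f (x + h) - f x)) @ 0^'+).

Definition S0plus (tau : R -> R) : Prop :=
  (forall x y, 0 <= x -> x <= y -> tau x <= tau y) /\
  (forall x y t, 0 <= x -> 0 <= y -> 0 <= t <= 1 ->
     tau (t * x + (1 - t) * y) <= t * tau x + (1 - t) * tau y) /\
  (forall x, 0 < x -> derivable tau x 1) /\
  (forall x y t, 0 < x -> 0 < y -> 0 <= t <= 1 ->
     t * (derive1 tau) x + (1 - t) * (derive1 tau) y <= (derive1 tau) (t * x + (1 - t) * y)) /\
  tau 0 = 0 /\
  (forall x, 0 < x -> 0 < (derive1 tau) x).

Definition frechet_obj (dO : measure_display) (Omega : measurableType dO)
  (P : probability Omega R) (Q : Type) (d : Q -> Q -> R) (tau : R -> R)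
  (Y : Omega -> Q) (o q : Q) : \bar R :=
  (\int[P]_w (tau (d (Y w) q) - tau (d (Y w) o))%:E)%E.

Definition is_tau_frechet_mean (dO : measure_display) (Omega : measurableType dO)
  (P : probability Omega R) (Q : Type) (d : Q -> Q -> R) (tau : R -> R)
  (Y : Omega -> Q) (o m : Q) : Prop :=
  forall q : Q, (frechet_obj P d tau Y o m <= frechet_obj P d tau Y o q)%E.

Definition x0_of (tau : R -> R) : \bar R :=
  ereal_inf [set x%:E | x in [set x : R | 0 < x /\ rderiv (tau_d tau) x = 0]].

End Defs.

(* Main.v *)
Require Import Defs.
From HB Require Import structures.
From mathcomp Require Import all_boot all_order all_algebra.
From mathcomp Require Import all_classical all_reals all_analysis.
From mathcomp Require Import ring lra measurable_realfun.
Import Order.TTheory GRing.Theory Num.Theory.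
Import numFieldNormedType.Exports.
Local Open Scope classical_set_scope.
Local Open Scope ring_scope.

Module Aux.


Section Tau.
Variable R : realType.
Variable tau : R -> R.
Hypothesis Htau : S0plus tau.

Lemma deriv_cvg x : 0 < x ->
  (fun h => h^-1 * (tau (h + x) - tau x)) @ 0^' --> derive1 tau x.
Proof.
move=> x0; have [_ [_ [hd _]]] := Htau.
have df := hd x x0.
rewrite derive1E.
have -> : (fun h => h^-1 * (tau (h + x) - tau x)) =
   (fun h => h^-1 *: ((tau \o shift x) (h *: 1) - tau x)).
  by apply/funext => h /=; rewrite /GRing.scale /= mulr1.
exact: df.
Qed.

Lemma grad x z : 0 < x -> 0 <= z -> tau x + (z - x) * derive1 tau x <= tau z.
Proof.
move=> x0 z0; have [_ [hc _]] := Htau.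
have hcv := deriv_cvg x x0.
have [zx|zx|->] := ltgtP z x; last by rewrite subrr mul0r addr0.
-
  have hl := cvg_dnbhs_at_left hcv.
  have Q : (tau z - tau x) / (z - x) <= derive1 tau x.
    apply: (cvgr_to_ge hl); near=> h.
    have h0 : h < 0 by near: h; exact: nbhs_left_lt.
    have hzx : z - x < h by near: h; apply: nbhs_left_gt; lra.
    set t := h / (z - x).
    have t0 : 0 <= t <= 1.
      apply/andP; split; rewrite /t.
        by rewrite ler_ndivlMr ?mul0r; lra.
      by rewrite ler_ndivrMr ?mul1r; lra.
    have := hc z x t z0 (ltW x0) t0.
    have -> : t * z + (1 - t) * x = h + x.
      by rewrite /t; field; lra.
    move=> ineq.
    have ineq2 : tau (h + x) - tau x <= t * (tau z - tau x) by lra.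
    have -> : (tau z - tau x) / (z - x) = t * (tau z - tau x) / h.
      by rewrite /t; field; lra.
    rewrite [X in X <= _]mulrC; apply: ler_wnM2l; last by lra.
    by rewrite invr_le0; lra.
  have : derive1 tau x * (z - x) <= (tau z - tau x).
    have E : (tau z - tau x) / (z - x) * (z - x) = tau z - tau x.
      by field; lra.
    rewrite -E; move: Q; generalize ((tau z - tau x) / (z - x)) => q Q; nra.
  lra.
- have hr := cvg_dnbhs_at_right hcv.
  have Q : derive1 tau x <= (tau z - tau x) / (z - x).
    apply: (cvgr_to_le hr); near=> h.
    have h0 : 0 < h by near: h; exact: nbhs_right_gt.
    have hzx : h < z - x by near: h; apply: nbhs_right_lt; lra.
    set t := h / (z - x).
    have t0 : 0 <= t <= 1.
      apply/andP; split; rewrite /t.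
        by rewrite divr_ge0; lra.
      by rewrite ler_pdivrMr ?mul1r; lra.
    have := hc z x t z0 (ltW x0) t0.
    have -> : t * z + (1 - t) * x = h + x.
      by rewrite /t; field; lra.
    move=> ineq.
    have ineq2 : tau (h + x) - tau x <= t * (tau z - tau x) by lra.
    have -> : (tau z - tau x) / (z - x) = t * (tau z - tau x) / h.
      by rewrite /t; field; lra.
    rewrite [X in _ <= X]mulrC; apply: ler_wpM2l; last by lra.
    by rewrite invr_ge0; lra.
  have : derive1 tau x * (z - x) <= (tau z - tau x).
    have E : (tau z - tau x) / (z - x) * (z - x) = tau z - tau x.
      by field; lra.
    rewrite -E; move: Q; generalize ((tau z - tau x) / (z - x)) => q Q; nra.
  lra.
Unshelve. all: by end_near. Qed.


Lemma tau_ge0 x : 0 <= x -> 0 <= tau x.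
Proof.
move=> x0; have [hm [_ [_ [_ [h0 _]]]]] := Htau.
by rewrite -h0; apply: hm.
Qed.

Lemma tau_lt c e : 0 <= c -> c < e -> tau c < tau e.
Proof.
move=> c0 ce; have [_ [_ [_ [_ [_ hp]]]]] := Htau.
have [c0'|c0'|<-] := ltgtP 0 c; last first.
- have e0 : 0 < e by lra.
  have g := grad (e/2) (0) ltac:(lra) (lexx 0).
  have := hp (e/2) ltac:(lra).
  have := tau_ge0 (e/2) ltac:(lra).
  have -> : tau 0 = 0 by case: Htau => _ [_ [_ [_ [-> _]]]].
  move=> t1 t2.
  have g2 := grad (e/2) (e) ltac:(lra) ltac:(lra).
  have : 0 < (e - e/2) * derive1 tau (e/2) by apply: mulr_gt0; lra.
  lra.
- lra.
- have g := grad (c) (e) c0' ltac:(lra).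
  have : 0 < (e - c) * derive1 tau c by apply: mulr_gt0; [lra|exact: hp].
  lra.
Qed.

Lemma deriv_mono x y : 0 < x -> x <= y -> derive1 tau x <= derive1 tau y.
Proof.
move=> x0 xy.
have g1 := grad (x) (y) x0 ltac:(lra).
have g2 := grad (y) (x) ltac:(lra) ltac:(lra).
have [->|xy'] := eqVneq x y; first by [].
have : 0 <= (y - x) * (derive1 tau y - derive1 tau x) by lra.
rewrite pmulr_rge0; first lra.
by rewrite subr_gt0 lt_neqAle xy' xy.
Qed.

Lemma tau_d_cvg : cvg (derive1 tau x @[x --> 0^'+]).
Proof.
apply: nondecreasing_at_right_is_cvgr.
  apply: nearW => b.
  move=> u v; rewrite !in_itv /= => /andP[u0 _] /andP[v0 _] uv.
  exact: deriv_mono.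
apply: nearW => b.
exists 0 => y [u]; rewrite /= in_itv /= => /andP[u0 _] <-.
by have [_ [_ [_ [_ [_ hp]]]]] := Htau; apply/ltW/hp.
Qed.

Lemma tau_d_ge0 t : 0 <= tau_d tau t.
Proof.
rewrite /tau_d; have [_ [_ [_ [_ [_ hp]]]]] := Htau.
case: ifPn => t0; first exact/ltW/hp.
apply: limr_ge; first exact: tau_d_cvg.
near=> u; apply/ltW/hp.
by near: u; exact: nbhs_right_gt.
Unshelve. all: by end_near. Qed.

Lemma tau_d_mono : nondecreasing_fun (tau_d tau).
Proof.
move=> u v uv; rewrite /tau_d.
case: ifPn => u0; case: ifPn => v0.
- exact: deriv_mono.
- lra.
- apply: limr_le; first exact: tau_d_cvg.
  near=> w; apply: deriv_mono; first by near: w; exact: nbhs_right_gt.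
  by apply/ltW; near: w; exact: nbhs_right_lt.
- by [].
Unshelve. all: by end_near. Qed.


Lemma affine_ge lo hi x : 0 <= lo -> lo < hi -> lo < x -> x <= (lo + hi) / 2 ->
  (tau lo + tau hi) / 2 <= tau ((lo + hi) / 2) ->
  tau lo + (tau hi - tau lo) / (hi - lo) * (x - lo) <= tau x.
Proof.
move=> lo0 lohi lox xM hM; have [_ [hc _]] := Htau.
set t := ((hi - (lo + hi) / 2) / (hi - x)).
have t0 : 0 < t by rewrite /t divr_gt0; lra.
have t1 : t <= 1 by rewrite /t ler_pdivrMr ?mul1r; lra.
have := hc x hi t ltac:(lra) ltac:(lra) ltac:(apply/andP; split; lra).
have -> : t * x + (1 - t) * hi = (lo + hi) / 2 by rewrite /t; field; lra.
move=> hc2.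
have E : t * (tau lo + (tau hi - tau lo) / (hi - lo) * (x - lo)) + (1 - t) * tau hi
   = (tau lo + tau hi) / 2 by rewrite /t; field; lra.
have : t * (tau lo + (tau hi - tau lo) / (hi - lo) * (x - lo)) <= t * tau x by lra.
by rewrite ler_pM2l.
Qed.

Lemma deriv_const lo hi x : 0 <= lo -> lo < hi -> lo < x -> x <= (lo + hi) / 2 ->
  (tau lo + tau hi) / 2 <= tau ((lo + hi) / 2) ->
  derive1 tau x = (tau hi - tau lo) / (hi - lo).
Proof.
move=> lo0 lohi lox xM hM.
have A := affine_ge lo hi x lo0 lohi lox xM hM.
have g1 := grad x lo ltac:(lra) lo0.
have g2 := grad x hi ltac:(lra) ltac:(lra).
have E : tau hi = tau lo + (tau hi - tau lo) / (hi - lo) * (hi - lo) by field; lra.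
move: A E; generalize ((tau hi - tau lo) / (hi - lo)) => s A E.
move: g1 g2; generalize (derive1 tau x) => d g1 g2.
apply/eqP; rewrite eq_le; apply/andP; split; nra.
Qed.

Lemma x0_le lo hi x : 0 <= lo -> lo < hi -> lo < x -> x < (lo + hi) / 2 ->
  (tau lo + tau hi) / 2 <= tau ((lo + hi) / 2) ->
  (x0_of tau <= x%:E)%E.
Proof.
move=> lo0 lohi lox xM hM.
apply: ereal_inf_lbound; exists x => //; split; first lra.
rewrite /rderiv.
apply: cvg_lim => //.
apply: cvg_near_cst; near=> h.
have h0 : 0 < h by near: h; exact: nbhs_right_gt.
have hM' : h < (lo + hi) / 2 - x by near: h; apply: nbhs_right_lt; lra.
rewrite /tau_d.
have -> : (0 < x + h) = true by apply/idP; lra.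
have -> : (0 < x) = true by apply/idP; lra.
rewrite (@deriv_const lo hi (x + h) lo0 lohi) //; try lra.
by rewrite (@deriv_const lo hi x lo0 lohi) //; try lra; rewrite subrr mulr0.
Unshelve. all: by end_near. Qed.

Lemma mid_core lo hi : 0 <= lo -> lo < hi -> (lo%:E < x0_of tau)%E ->
  (tau lo + tau hi) / 2 <= tau ((lo + hi) / 2) -> False.
Proof.
move=> lo0 lohi lx0 hM.
have H x : lo < x -> x < (lo + hi) / 2 -> (x0_of tau <= x%:E)%E.
  by move=> ? ?; apply: (@x0_le lo hi x lo0 lohi).
move: lx0 H; case: (x0_of tau) => [r| |] //= lr H.
- rewrite lte_fin in lr.
  have := H ((lo + Num.min ((lo + hi) / 2) r) / 2).
  have m1 : lo < Num.min ((lo + hi) / 2) r by rewrite lt_min; apply/andP; split; lra.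
  have m2 : Num.min ((lo + hi) / 2) r <= (lo + hi) / 2 by rewrite ge_min lexx.
  have m3 : Num.min ((lo + hi) / 2) r <= r by rewrite ge_min lexx orbT.
  rewrite lee_fin => /(_ ltac:(lra) ltac:(lra)); lra.
- by have := H ((lo + (lo + hi) / 2) / 2) ltac:(lra) ltac:(lra).
Qed.

Lemma mid_strict a b : 0 <= a -> 0 <= b -> a != b -> (a%:E < x0_of tau)%E ->
  tau ((a + b) / 2) < (tau a + tau b) / 2.
Proof.
move=> a0 b0 ab ax0; rewrite ltNge; apply/negP => hM.
have [lt|lt] : a < b \/ b < a by move: ab; rewrite neq_lt => /orP.
- exact: (@mid_core a b a0 lt ax0 hM).
- apply: (@mid_core b a b0 lt).
    by apply: le_lt_trans ax0; rewrite lee_fin; lra.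
  by rewrite addrC [X in _ <= tau (X / _)]addrC.
Qed.


Lemma pw a b c e : 0 <= a -> 0 <= b -> 0 <= c -> 0 < e -> b <= a + e -> a <= b + e ->
  c ^+ 2 <= 2^-1 * a ^+ 2 + 2^-1 * b ^+ 2 - 4^-1 * e ^+ 2 ->
  tau c <= (tau a + tau b) / 2 /\
  ((a%:E < x0_of tau)%E -> tau c < (tau a + tau b) / 2).
Proof.
move=> a0 b0 c0 e0 h1 h2 hc.
have [hm [hcv _]] := Htau.
have cM : c <= (a + b) / 2.
  have ee : (a - b) ^+ 2 <= e ^+ 2.
    have : 0 <= (e - (a - b)) * (e + (a - b)) by apply: mulr_ge0; lra.
    have -> : (e - (a - b)) * (e + (a - b)) = e ^+ 2 - (a - b) ^+ 2 by ring.
    lra.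
  have : c ^+ 2 <= ((a + b) / 2) ^+ 2.
    apply: (le_trans hc); rewrite !expr2 in ee *; lra.
  rewrite -ler_sqrt ?sqrtr_sqr; first by rewrite !ger0_norm //; lra.
  nra.
have conv : tau ((a + b) / 2) <= (tau a + tau b) / 2.
  have := hcv a b (1/2) a0 b0 ltac:(apply/andP; split; lra).
  have -> : 1 / 2 * a + (1 - 1 / 2) * b = (a + b) / 2 by field.
  lra.
have mono : tau c <= tau ((a + b) / 2) by apply: hm => //; lra.
split; first lra.
move=> ax0.
have [ab|ab] := eqVneq a b.
  subst b.
  have ca : c < a.
    have : c ^+ 2 < a ^+ 2 by nra.
    rewrite -ltr_sqrt ?sqrtr_sqr; first by rewrite !ger0_norm //; lra.
    nra.
  have := tau_lt c a c0 ca; lra.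
have := mid_strict a b a0 b0 ab ax0; lra.
Qed.

End Tau.
Arguments grad {R tau}.
Arguments tau_ge0 {R tau}.
Arguments tau_lt {R tau}.
Arguments tau_d_ge0 {R tau}.
Arguments tau_d_mono {R tau}.
Arguments mid_strict {R tau}.
Arguments pw {R tau}.



Lemma pos_int d (T : measurableType d) (R : realType) (mu : {measure set T -> \bar R})
  (k : T -> R) (A : set T) :
  measurable A -> (0 < mu A)%E -> (forall w, 0 <= k w) ->
  (forall w, A w -> 0 < k w) -> measurable_fun setT k ->
  (0 < \int[mu]_w (k w)%:E)%E.
Proof.
move=> mA muA k0 kA mk.
rewrite lt_neqAle integral_ge0 ?andbT; last by move=> w _; rewrite lee_fin.
apply/negP => /eqP I0.
pose c (n : nat) : R := (n.+1%:R)^-1.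
have c0 n : 0 < c n by rewrite /c invr_gt0.
pose B n := A `&` [set w | c n < k w].
have mB n : measurable (B n).
  apply: measurableI => //.
  have := mk measurableT _ (measurable_itv `]c n, +oo[).
  rewrite setTI; congr measurable; apply/seteqP; split => w /=;
    by rewrite in_itv /= andbT.
have PB n : mu (B n) = 0%E.
  apply/eqP; rewrite eq_le measure_ge0 andbT.
  have H : ((c n)%:E * mu (B n) <= \int[mu]_w (k w)%:E)%E.
    rewrite -(setIT (B n)) -integral_indic //.
    rewrite -ge0_integralZl_EFin //; try exact: ltW;
      try (by apply/measurable_EFinP; exact: measurable_indic);
      try (by move=> w Hw; rewrite lee_fin).
    apply: ge0_le_integral => //.
    - by move=> w _; rewrite lee_fin mulr_ge0 // ltW.
    - apply/measurable_EFinP.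
      have mi : measurable_fun setT (\1_(B n) : T -> R) by exact: measurable_indic.
      first [ exact: (measurable_funM (measurable_cst (c n)) mi) | idtac "A";
              exact: (measurableT_comp (mulrl_measurable (c n)) mi) | idtac "B";
              exact: measurableT_comp mi ].
    - exact/measurable_EFinP.
    move=> w _; rewrite lee_fin /indic.
    case: (boolP (w \in B n)) => [/set_mem [_ /= /ltW]|_]; first by rewrite mulr1.
    by rewrite mulr0.
  by move: H; rewrite -I0 pmule_rle0 // lte_fin.
have : (mu A <= \sum_(n <oo) mu (B n))%E.
  apply: measure_sigma_subadditive => // w Aw.
  have kw := kA w Aw.
  exists (Num.Def.trunc (k w)^-1) => //=; split => //=.
  rewrite /c invf_plt ?posrE //.
  exact: truncnS_gt.
rewrite eseries0; last by move=> i _ _; exact: PB.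
by rewrite leNgt muA.
Qed.



Section Main.
Variables (R : realType) (Q : Type) (d : Q -> Q -> R)
  (dO : measure_display) (Omega : measurableType dO) (P : probability Omega R)
  (Y : Omega -> Q) (o : Q) (tau : R -> R).
Hypotheses (Hm : is_metric d) (HY : random_variable_in d Y) (Ht : S0plus tau)
  (Hint : (\int[P]_w (tau_d tau (d (Y w) o))%:E < +oo)%E).

Lemma d_ge0 x y : 0 <= d x y. Proof. by case: Hm. Qed.
Lemma d_sym x y : d x y = d y x. Proof. by case: Hm => _ [_ [? _]]. Qed.
Lemma d_tri x y z : d x z <= d x y + d y z. Proof. by case: Hm => _ [_ [_ ?]]. Qed.
Lemma d_eq0 x y : d x y = 0 -> x = y. Proof. by case: Hm => _ [h _] /h. Qed.

Lemma meas_d q : measurable_fun setT (fun w => d (Y w) q).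
Proof.
move=> mT; apply: (measurability _ (RGenInftyO.measurableE R)) => //.
move=> _ [_ [x ->] <-]; rewrite setTI.
have -> : (fun w => d (Y w) q) @^-1` `]-oo, x[ = Y @^-1` [set p | d p q < x].
  by apply/seteqP; split => w /=; rewrite in_itv.
apply: HY => p /= hp; exists (x - d p q); split; first lra.
move=> y hy; have := d_tri y p q; rewrite (d_sym y p); lra.
Qed.

Definition taup (x : R) := tau (if 0 <= x then x else 0).

Lemma meas_taup : measurable_fun setT taup.
Proof.
apply: nondecreasing_measurable => // x y xy; rewrite /taup.
have [hm _] := Ht.
case: ifPn => x0; case: ifPn => y0; apply: hm => //; lra.
Qed.

Lemma meas_tauD q : measurable_fun setT (fun w => tau (d (Y w) q)).
Proof.
have -> : (fun w => tau (d (Y w) q)) = taup \o (fun w => d (Y w) q).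
  apply/funext => w; rewrite /taup /=; congr tau.
  by rewrite d_ge0.
exact: measurableT_comp meas_taup (meas_d q).
Qed.

Definition f q w := tau (d (Y w) q) - tau (d (Y w) o).
Definition h w := tau_d tau (d (Y w) o).

Lemma meas_f q : measurable_fun setT (f q).
Proof. exact: measurable_funB (meas_tauD q) (meas_tauD o). Qed.

Lemma meas_h : measurable_fun setT h.
Proof.
apply: measurableT_comp (meas_d o).
exact: nondecreasing_measurable (tau_d_mono Ht).
Qed.

Lemma h_ge0 w : 0 <= h w. Proof. exact: tau_d_ge0 Ht _. Qed.

Lemma int_h : P.-integrable setT (EFin \o h).
Proof.
apply/integrableP; split; first exact/measurable_EFinP/meas_h.
under eq_integral do rewrite /= ger0_norm ?h_ge0//.
exact: Hint.
Qed.

Lemma f_lb q w : - (d o q * h w) <= f q w.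
Proof.
rewrite /f /h; set x := d (Y w) o; set y := d (Y w) q.
have x0 : 0 <= x by exact: d_ge0.
have y0 : 0 <= y by exact: d_ge0.
have hq : 0 <= d o q by exact: d_ge0.
have hh : 0 <= tau_d tau x by exact: tau_d_ge0 Ht _.
have [xy|yx] := leP x y.
  have [hm _] := Ht; have := hm x y x0 xy.
  have : 0 <= d o q * tau_d tau x by exact: mulr_ge0.
  lra.
have xp : 0 < x by lra.
have g := grad Ht x y xp y0.
have tri : x <= y + d o q by rewrite /x /y -(d_sym q o); exact: d_tri.
have -> : tau_d tau x = derive1 tau x by rewrite /tau_d xp.
move: g hh; rewrite /tau_d xp => g hh.
nra.
Qed.


Lemma int_of (g : Omega -> R) (c : R) : 0 <= c -> measurable_fun setT g ->
  (forall w, - (c * h w) <= g w) -> (\int[P]_w (g w)%:E < +oo)%E ->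
  P.-integrable setT (EFin \o g).
Proof.
move=> c0 mg lb ilt.
have mG : measurable_fun setT (EFin \o g) by exact/measurable_EFinP.
have mch : measurable_fun setT (fun w => c * h w).
  exact: (measurable_funM (measurable_cst c) meas_h).
have chfin : (\int[P]_w ((c * h w)%:E) < +oo)%E.
  have := integrable_lty measurableT (integrableZl measurableT c int_h).
  by under eq_integral do rewrite /= -EFinM.
have neg : (\int[P]_w (EFin \o g)^\- w <= \int[P]_w ((c * h w)%:E))%E.
  apply: ge0_le_integral => //.
  - exact: measurable_funeneg.
  - exact/measurable_EFinP.
  move=> w _; rewrite funenegE /= ge_max; apply/andP; split.
  - rewrite lee_fin; have := lb w; lra.
  - by rewrite lee_fin mulr_ge0 ?h_ge0.
have negfin : (\int[P]_w (EFin \o g)^\- w < +oo)%E by exact: le_lt_trans chfin.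
have negfn : (\int[P]_w (EFin \o g)^\- w \is a fin_num)%E.
  rewrite ge0_fin_numE //; apply: integral_ge0 => w _; exact: funeneg_ge0.
have posfin : (\int[P]_w (EFin \o g)^\+ w < +oo)%E.
  move: ilt; rewrite integralE => ilt.
  rewrite -(subeK (\int[P]_w (EFin \o g)^\+ w) negfn); exact: lte_add_pinfty.
apply/integrableP; split => //.
rewrite (_ : (fun x => `|(EFin \o g) x|%E) = (fun x => (EFin \o g)^\+ x + (EFin \o g)^\- x)%E); last first.
  by apply/funext => x; have := congr1 (fun F => F x) (fune_abse (EFin \o g)).
rewrite ge0_integralD //; first exact: lte_add_pinfty.
- exact: measurable_funepos.
- exact: measurable_funeneg.
Qed.


Lemma obj_o : (\int[P]_w (f o w)%:E = 0)%E.
Proof. by apply: integral0_eq => w _; rewrite /f subrr. Qed.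

Lemma uniq_mean (Hmid : forall y0 y1 : Q, exists m : Q, forall q : Q,
    2^-1 * d y0 q ^+ 2 + 2^-1 * d y1 q ^+ 2 - 4^-1 * d y0 y1 ^+ 2 >= d q m ^+ 2)
  m m' : is_tau_frechet_mean P d tau Y o m -> is_tau_frechet_mean P d tau Y o m' ->
  (0 < P [set w | ((d (Y w) m)%:E < x0_of tau)%E])%E -> m' = m.
Proof.
move=> Hmm Hmm' Hpos.
case: (pselect (m' = m)) => // neq; exfalso.
have e0 : 0 < d m m'.
  rewrite lt_neqAle d_ge0 andbT; apply/eqP => /esym /d_eq0 E.
  by apply: neq; rewrite E.
have [z hz] := Hmid m m'.
have objE q : frechet_obj P d tau Y o q = (\int[P]_w (f q w)%:E)%E by [].
have Fle q : (\int[P]_w (f m w)%:E <= \int[P]_w (f q w)%:E)%E.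
  by have := Hmm q; rewrite !objE.
have Gle q : (\int[P]_w (f m' w)%:E <= \int[P]_w (f q w)%:E)%E.
  by have := Hmm' q; rewrite !objE.
have intF : P.-integrable setT (EFin \o f m).
  apply: (int_of (f m) (d o m)); first exact: d_ge0.
  - exact: meas_f.
  - exact: f_lb.
  - by apply: (le_lt_trans (Fle o)); rewrite obj_o.
have intG : P.-integrable setT (EFin \o f m').
  apply: (int_of (f m') (d o m')); first exact: d_ge0.
  - exact: meas_f.
  - exact: f_lb.
  - by apply: (le_lt_trans (Gle o)); rewrite obj_o.
have PW w : f z w <= (f m w + f m' w) / 2 /\
   (((d (Y w) m)%:E < x0_of tau)%E -> f z w < (f m w + f m' w) / 2).
  have hb : d (Y w) m' <= d (Y w) m + d m m' by exact: d_tri.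
  have ha : d (Y w) m <= d (Y w) m' + d m m'.
    by rewrite (d_sym m m'); exact: d_tri.
  have hc := hz (Y w); rewrite (d_sym m (Y w)) (d_sym m' (Y w)) in hc.
  have [p1 p2] := pw Ht (d (Y w) m) (d (Y w) m') (d (Y w) z) (d m m')
    (d_ge0 _ _) (d_ge0 _ _) (d_ge0 _ _) e0 hb ha hc.
  rewrite /f; split; first lra.
  by move=> /p2; lra.
have intH : P.-integrable setT (EFin \o f z).
  have intB : P.-integrable setT
      (EFin \o (fun w => `|f m w| + `|f m' w| + d o z * h w)).
    have := integrableD measurableT
      (integrableD measurableT (integrable_norm intF) (integrable_norm intG))
      (integrableZl measurableT (d o z) int_h).
    move=> H; apply: (eq_integrable measurableT _ _ _ H) => w _ /=.
    by rewrite !EFinD EFinM.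
  apply: (le_integrable measurableT _ _ intB).
    exact/measurable_EFinP/meas_f.
  move=> w _ /=; rewrite lee_fin.
  have [p1 _] := PW w.
  have l1 := f_lb z w.
  have hh : 0 <= d o z * h w by rewrite mulr_ge0 ?h_ge0 ?d_ge0.
  rewrite [X in _ <= X]ger0_norm; last by rewrite addr_ge0 // addr_ge0.
  rewrite ler_norml; apply/andP; split.
  - have := normr_ge0 (f m w); have := normr_ge0 (f m' w); lra.
  - have := ler_norm (f m w); have := ler_norm (f m' w); lra.
pose A := [set w | ((d (Y w) m)%:E < x0_of tau)%E].
have mA : measurable A.
  rewrite /A; case: (x0_of tau) => [r| |].
  - have := meas_d m measurableT _ (measurable_itv `]-oo, r[).
    rewrite setTI; congr measurable; apply/seteqP; split => w /=;
      by rewrite in_itv /= lte_fin.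
  - have -> : [set w | ((d (Y w) m)%:E < +oo)%E] = setT.
      by apply/seteqP; split => w //= _; exact: ltey.
    exact: measurableT.
  - have -> : [set w | ((d (Y w) m)%:E < -oo)%E] = set0.
      by apply/seteqP; split => w //=; rewrite ltNge leNye.
    exact: measurable0.
pose K := fun w => (f m w + f m' w) / 2 - f z w.
have mK : measurable_fun setT K.
  exact: (measurable_funB (measurable_funM (measurable_funD (meas_f m) (meas_f m'))
    (measurable_cst (2^-1 : R))) (meas_f z)).
have Kpos : (0 < \int[P]_w (K w)%:E)%E.
  apply: (@pos_int _ _ _ P K A mA Hpos); last exact: mK; move=> w; rewrite /K.
  - by have [p1 _] := PW w; lra.
  - by move=> Aw; have [_ p2] := PW w; have := p2 Aw; lra.
have intFG : P.-integrable setT (fun w => (f m w + f m' w)%:E).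
  have := integrableD measurableT intF intG.
  by move=> H; apply: (eq_integrable measurableT _ _ _ H) => w _ /=; rewrite EFinD.
have intL : P.-integrable setT (EFin \o (fun w => (f m w + f m' w) / 2)).
  have := integrableZl measurableT (2^-1) intFG.
  by move=> H; apply: (eq_integrable measurableT _ _ _ H) => w _ /=; rewrite -EFinM mulrC.
have eK : (\int[P]_w (K w)%:E = 2^-1%:E * (\int[P]_w (f m w)%:E + \int[P]_w (f m' w)%:E)
    - \int[P]_w (f z w)%:E)%E.
  rewrite /K; under eq_integral do rewrite EFinB.
  rewrite (integralB_EFin measurableT intL intH).
  congr (_ - _)%E.
  under eq_integral do rewrite mulrC EFinM.
  rewrite (integralZl measurableT intFG).
  congr (_ * _)%E.
  have := integralD_EFin measurableT intF intG.
  by under eq_integral do rewrite /= EFinD.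
move: Kpos; rewrite eK.
have fF := integrable_fin_num measurableT intF.
have fG := integrable_fin_num measurableT intG.
have fH := integrable_fin_num measurableT intH.
have h1 := Fle m'. have h2 := Gle m. have h3 := Fle z.
move: fF fG fH h1 h2 h3.
move: (\int[P]_w (f m w)%:E)%E (\int[P]_w (f m' w)%:E)%E (\int[P]_w (f z w)%:E)%E.
move=> [x| |] // [y| |] // [u| |] // _ _ _.
rewrite !lee_fin => h1 h2 h3; rewrite -EFinD lte_fin; lra.
Qed.

End Main.

End Aux.

Theorem mainTheorem7 (R : realType) (Q : Type) (d : Q -> Q -> R)
  (dO : measure_display) (Omega : measurableType dO) (P : probability Omega R)
  (Y : Omega -> Q) (o : Q) (tau : R -> R) (m : Q) :
  hadamard_space d ->
  random_variable_in d Y ->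
  S0plus tau ->
  (\int[P]_w (tau_d tau (d (Y w) o))%:E < +oo)%E ->
  is_tau_frechet_mean P d tau Y o m ->
  ((0 < P [set w | ((d (Y w) m)%:E < x0_of tau)%E])%E ->
     forall m' : Q, is_tau_frechet_mean P d tau Y o m' -> m' = m) /\
  ((forall x : R, 0 < x -> 0 < rderiv (tau_d tau) x) ->
     forall m' : Q, is_tau_frechet_mean P d tau Y o m' -> m' = m).
Proof.
move=> [Hm [_ Hmid]] HY Ht Hint Hmean.
split.
- move=> Hpos m' Hm'.
  exact: (@Aux.uniq_mean _ _ d _ _ P Y o tau Hm HY Ht Hint Hmid m m' Hmean Hm' Hpos).
- move=> Hr m' Hm'.
  apply: (@Aux.uniq_mean _ _ d _ _ P Y o tau Hm HY Ht Hint Hmid m m' Hmean Hm').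
  have -> : x0_of tau = +oo%E.
    rewrite /x0_of.
    have -> : [set x%:E | x in [set x : R | 0 < x /\ rderiv (tau_d tau) x = 0]] = set0.
      apply/seteqP; split => // t [x [x0 hx] ext].
      by have := Hr x x0; rewrite hx ltxx.
    exact: ereal_inf0.
  have -> : [set w | ((d (Y w) m)%:E < +oo)%E] = setT.
    by apply/seteqP; split => w //= _; exact: ltey.
  by rewrite probability_setT lte01.
Qed.
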